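(* If $w$ is an infinite word over a finite alphabet $A$ and $H$ is a graph on $A$ with loops allowed, then the class $\mathcal{P}(w,H)$ is above the Bell number.
   Context: Words over $A$ are maps $w:S\to A$ with $S=\{1,\dots,n\}$ or $\mathbb{N}$, $w_i=w(i)$. For positive integers $u_1<\dots<u_m$, $G_{w,H}(u_1,\dots,u_m)$ is the graph on $\{u_1,\dots,u_m\}$ in which $u_iu_j$ is an edge iff ($|u_i-u_j|=1$ and $w_{u_i}w_{u_j}\notin E(H)$) or ($|u_i-u_j|>1$ and $w_{u_i}w_{u_j}\in E(H)$) (for equal letters $a$ this refers to a loop at $a$). $\mathcal{P}(w,H)$ is the hereditary class of all graphs isomorphic to some $G_{w,H}(u_1,\dots,u_m)$. A hereditary class is above the Bell number if the number of its graphs on vertex set $\{1,\dots,n\}$ is at least $n^{(1-o(1))n}$ (equivalently, at least the Bell number $B_n$). *)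

(* Defs.v *)
From mathcomp Require Import all_boot.
Set Implicit Arguments. Unset Strict Implicit. Unset Printing Implicit Defensive.

Definition consecutive (x y : nat) : bool := (x.+1 == y) || (y.+1 == x).

Definition wH_adj (A : Type) (w : nat -> A) (H : rel A) (x y : nat) : bool :=
  (consecutive x y && ~~ H (w x) (w y)) ||
  [&& x != y, ~~ consecutive x y & H (w x) (w y)].

(* A labelled graph on vertex set {1..n} (encoded as 'I_n), given by its set of
   ordered adjacent pairs, belongs to P(w,H) iff it is isomorphic to
   G_{w,H}(u_1,...,u_n) for some distinct positive integers u_i
   (the isomorphism being i |-> u i). *)
Definition in_P (A : Type) (w : nat -> A) (H : rel A) (n : nat)
  (g : {set 'I_n * 'I_n}) : Prop :=
  exists u : 'I_n -> nat,
    injective u /\ (forall i, 0 < u i) /\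
    (forall i j, ((i, j) \in g) = (i != j) && wH_adj w H (u i) (u j)).

(* A hereditary class (given by its labelled members on {1..n}) is above the
   Bell number: the number of its graphs on {1..n} is at least n^((1-o(1))n),
   i.e. for every k >= 1, eventually  count_n >= n^((1-1/k) n),
   written without reals as  count_n ^ k >= n ^ ((k-1) n). *)
Definition above_Bell (P : forall n : nat, {set 'I_n * 'I_n} -> Prop) : Prop :=
  forall k : nat, 0 < k ->
    exists N : nat, forall n : nat, N <= n ->
      exists S : {set {set 'I_n * 'I_n}},
        (forall g, g \in S -> P n g) /\ n ^ ((k - 1) * n) <= #|S| ^ k.

(* Main.v *)
Require Import Defs.
From mathcomp Require Import all_boot all_fingroup zify.
From Stdlib Require Import Classical.
Set Implicit Arguments. Unset Strict Implicit. Unset Printing Implicit Defensive.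

Lemma expLe m n e : m <= n -> m ^ e <= n ^ e.
Proof. move=> h; elim: e => // e IH; rewrite !expnS; exact: leq_mul. Qed.
Arguments expLe {m n} e.

Lemma fact_ge d m : d <= m -> d ^ (m - d) <= m`!.
Proof.
elim: m => [|m IH] hd; first by rewrite leqn0 in hd; rewrite (eqP hd).
move: hd; rewrite leq_eqVlt => /orP [/eqP -> | hlt]; first by rewrite subnn expn0 fact_gt0.
rewrite subSn // expnS factS; apply: leq_mul; [exact: ltnW | exact: IH].
Qed.

Lemma ident k' q : k'.+1*q + (k'*(((2*k'.+1).+1)*(2*k'.+1))*q + k'.+1*q) <= ((2*k'.+1)*q - q)*((2*k'.+1)*k'.+1).
Proof.
have -> : (2*k'.+1)*q = (2*k'+1)*q + q by nia.
rewrite addnK mulnA. nia.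
Qed.

Lemma aux1 a q : 0 < q -> a * q.+1 <= 2*a*q.
Proof. move=> h; nia. Qed.

Lemma arith k : 0 < k -> exists N, forall n, N <= n ->
  let q := n %/ ((2*k).+1 * (2*k)) in
  [/\ 0 < (2*k) * q, (2*k).+1 * ((2*k)*q) <= n &
      n ^ ((k-1)*n) <= (((2*k)*q)`! ^ (2*k)) ^ k].
Proof.
case: k => // k' _.
have hLT : 0 < (2*k'.+1).+1 * (2*k'.+1) by rewrite muln_gt0.
pose X := (2*k'.+1).+1 * (2*k'.+1).
pose a := k' * X. pose C := 2 * X.
pose Q := C^(2*a) + a + 1.
exists (Q * X) => n hn /=.
have hq : Q <= n %/ X by rewrite -(mulnK Q hLT); exact: leq_div2r.
have hsub : (2*k'.+1).+1 * ((2*k'.+1) * (n %/ X)) <= n.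
  by rewrite mulnA mulnC; exact: leq_divM.
have hn1 : n < (n %/ X).+1 * X := ltn_ceil n hLT.
rewrite -/X. move: hq hsub hn1. set q := n %/ X. move=> hq hsub hn1.
clearbody q.
have hq1 : 0 < q by rewrite /Q in hq; lia.
have hX : 0 < X by [].
have hC : 0 < C by rewrite /C; lia.
split => //; first by rewrite muln_gt0.
have hnC : n <= C * q.
  move: hn1; rewrite /C mulSn -mulnA (mulnC X q).
  have : X <= q * X by rewrite leq_pmull.
  lia.
have hfact : q ^ ((2*k'.+1)*q - q) <= ((2*k'.+1)*q)`!.
  by apply: fact_ge; rewrite leq_pmull.
have e1 : n ^ (k' * n) <= (C*q) ^ (a * q.+1).
  apply: (leq_trans (expLe _ hnC)); apply: leq_pexp2l; first by rewrite muln_gt0 hC.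
  by rewrite /a -mulnA (mulnC X); exact: leq_mul (leqnn _) (ltnW hn1).
have e2 : (C*q) ^ (a * q.+1) <= q ^ (k'.+1*q) * q ^ (a*q + k'.+1*q).
  rewrite expnMn; apply: leq_mul.
    apply: (@leq_trans (C ^ (2*a*q))); first by apply: leq_pexp2l => //; exact: aux1.
    rewrite expnM; apply: (@leq_trans (q ^ q)); first by apply: expLe; rewrite /Q in hq; lia.
    by apply: leq_pexp2l => //; rewrite leq_pmull.
  apply: leq_pexp2l => //; rewrite mulnS addnC leq_add2l.
  apply: (@leq_trans q); first by rewrite /Q in hq; lia.
  by rewrite leq_pmull.
have e3 : q ^ (k'.+1*q) * q ^ (a*q + k'.+1*q) <= (((2*k'.+1) * q)`! ^ (2*k'.+1)) ^ k'.+1.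
  rewrite -expnD; refine (leq_trans _ (expLe k'.+1 (expLe (2*k'.+1) hfact))).
  rewrite -!expnM; apply: leq_pexp2l => //.
  rewrite /a /X; exact: ident.
have -> : k'.+1 - 1 = k' by lia.
exact: (leq_trans e1 (leq_trans e2 e3)).
Qed.

Lemma recurrent_factor (A : finType) (w : nat -> A) L :
  exists x : {ffun 'I_L -> A}, forall N, exists p, (N <= p) && [forall t : 'I_L, w (p + t) == x t].
Proof.
apply: NNPP => hno.
have hb : forall x : {ffun 'I_L -> A}, exists N, forall p, N <= p -> ~~ [forall t : 'I_L, w (p + t) == x t].
  move=> x; apply: NNPP => hx; apply: hno; exists x => N; apply: NNPP => hN; apply: hx.
  exists N => p hp; apply/negP => hP; apply: hN; exists p; by rewrite hp hP.
have [Nf hNf] := fin_all_exists hb.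
set N := \max_(x : {ffun 'I_L -> A}) Nf x.
have := hNf [ffun t : 'I_L => w (N + t)] N (leq_bigmax _).
by move/negP; apply; apply/forallP => t; rewrite ffunE.
Qed.

Lemma seq_pos (P : pred nat) L n0 : (forall N, exists p, (N <= p) && P p) ->
  exists p : nat -> nat, [/\ forall a, P (p a), n0 <= p 0 & forall a b, a < b -> p a + L < p b].
Proof.
move=> hP. pose q N := xchoose (hP N).
have hq N : (N <= q N) && P (q N) := xchooseP (hP N).
pose p a := iter a (fun y => q (y + L).+1) (q n0).
have step a : p a + L < p a.+1 by case/andP: (hq (p a + L).+1).
exists p; split.
- case=> [|a] /=; first by case/andP: (hq n0).
  by case/andP: (hq (p a + L).+1).
- by case/andP: (hq n0).
- move=> a b; elim: b => // b IH; rewrite ltnS leq_eqVlt => /orP [/eqP -> // | hab].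
  have := IH hab; have := step b; lia.
Qed.

Definition sig_perm l m (f : {ffun 'I_l -> {perm 'I_m}}) (s : nat) : {perm 'I_m} :=
  if s is s'.+1 then (if insub s' is Some o then f o else 1%g) else 1%g.

Lemma sig_permS l m (f : {ffun 'I_l -> {perm 'I_m}}) (o : 'I_l) : sig_perm f o.+1 = f o.
Proof. by rewrite /sig_perm valK. Qed.

Lemma idx s c m L : s < L -> c < m -> s*m + c < L*m.
Proof. move=> h1 h2; nia. Qed.

Lemma construct (A : finType) (w : nat -> A) (H : rel A) l m' n :
  l.+1 * m'.+1 <= n ->
  exists S : {set {set 'I_n * 'I_n}}, (forall g, g \in S -> in_P w H g) /\ #|S| = m'.+1`! ^ l.
Proof.
move=> hLn.
have [x hx] := recurrent_factor w l.+1.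
have [p [hpP hp0 hpinc]] := seq_pos l.+1 n.+2 hx.
have hpmono a : n.+2 <= p a.
  case: a => // a; have := hpinc 0 a.+1 (ltn0Sn a); lia.
have wp a t : t < l.+1 -> w (p a + t) = w (p 0 + t).
  move=> ht; have /forallP/(_ (Ordinal ht))/eqP -> := hpP a.
  by have /forallP/(_ (Ordinal ht))/eqP -> := hpP 0.
have pinj a b s t : s < l.+1 -> t < l.+1 -> p a + s = p b + t -> a = b /\ s = t.
  move=> hs ht he; case: (ltngtP a b) => hab.
  - have := hpinc _ _ hab; lia.
  - have := hpinc _ _ hab; lia.
  - subst; split => //; lia.
have adj a b s : s.+1 < l.+1 -> wH_adj w H (p a + s) (p b + s.+1) =
    if a == b then ~~ H (w (p 0 + s)) (w (p 0 + s.+1)) else H (w (p 0 + s)) (w (p 0 + s.+1)).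
  move=> hs; rewrite /wH_adj (wp a s) ?(ltnW hs) // (wp b s.+1) //.
  rewrite /consecutive; case: (ltngtP a b) => hab.
  - have := hpinc _ _ hab => h.
    have -> : ((p a + s).+1 == p b + s.+1) = false by apply/negbTE/eqP; lia.
    have -> : ((p b + s.+1).+1 == p a + s) = false by apply/negbTE/eqP; lia.
    have -> : (p a + s != p b + s.+1) by apply/eqP; lia.
    by [].
  - have := hpinc _ _ hab => h.
    have -> : ((p a + s).+1 == p b + s.+1) = false by apply/negbTE/eqP; lia.
    have -> : ((p b + s.+1).+1 == p a + s) = false by apply/negbTE/eqP; lia.
    have -> : (p a + s != p b + s.+1) by apply/eqP; lia.
    by [].
  - subst b; rewrite addnS eqxx /=; by case: (H _ _); rewrite ?andbF.
set m := m'.+1.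
pose u (f : {ffun 'I_l -> {perm 'I_m}}) (i : 'I_n) : nat :=
  if i < l.+1 * m then p (sig_perm f (i %/ m) (inord (i %% m))) + i %/ m else i.+1.
pose g f := [set ij : 'I_n * 'I_n | (ij.1 != ij.2) && wH_adj w H (u f ij.1) (u f ij.2)].
have hm : 0 < m by [].
have uinj f : injective (u f).
  move=> i j; rewrite /u; case: ifP => hi; case: ifP => hj he.
  - have hs : i %/ m < l.+1 by rewrite ltn_divLR.
    have ht : j %/ m < l.+1 by rewrite ltn_divLR.
    have [hab hst] := pinj _ _ _ _ hs ht he.
    rewrite hst in hab.
    have /perm_inj/(congr1 (@nat_of_ord _)) := val_inj hab.
    rewrite !inordK ?ltn_pmod // => hmod.
    by apply: val_inj; rewrite /= (divn_eq i m) (divn_eq j m) hst hmod.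
  - have h1 := leq_addr (i %/ m) (p (sig_perm f (i %/ m) (inord (i %% m)))).
    rewrite he in h1; have h2 := hpmono (sig_perm f (i %/ m) (inord (i %% m))).
    have h3 := ltn_ord j; move: h1 h2 h3; move: (p _) => z; clear; lia.
  - have h1 := leq_addr (j %/ m) (p (sig_perm f (j %/ m) (inord (j %% m)))).
    rewrite -he in h1; have h2 := hpmono (sig_perm f (j %/ m) (inord (j %% m))).
    have h3 := ltn_ord i; move: h1 h2 h3; move: (p _) => z; clear; lia.
  - by apply: val_inj; case: he.
have uval f t (c : 'I_m) (ht : t < l.+1) (hlt : t*m + c < n) :
    u f (Ordinal hlt) = p (sig_perm f t c) + t.
  rewrite /u /= idx // divnMDl // divn_small // addn0 modnMDl modn_small //.
  by rewrite inord_val.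
have ginj : injective g.
  move=> f f' hg.
  have key s c c' : s < l ->
      (sig_perm f s c == sig_perm f s.+1 c') = (sig_perm f' s c == sig_perm f' s.+1 c').
    move=> hs.
    have hi : s*m + c < n by apply: leq_trans hLn; apply: idx; [apply: (ltn_trans hs)|].
    have hj : s.+1*m + c' < n by apply: leq_trans hLn; apply: idx.
    have := hg; move/setP/(_ (Ordinal hi, Ordinal hj)).
    rewrite /g /= !inE /= !uval ?(ltn_trans hs) // !adj //.
    have -> : (Ordinal hi != Ordinal hj).
      apply/eqP => /(congr1 (@nat_of_ord _)) /=.
      have := idx (ltnSn s) (ltn_ord c) (m:=m); rewrite mulSn; lia.
    rewrite -/(sig_perm f s.+1) -/(sig_perm f' s.+1) !val_eqE.
    by case: (H _ _); case: (_ == _); case: (_ == _).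
  have hall s : s <= l -> sig_perm f s = sig_perm f' s.
    elim: s => [|s IH] hs; first by [].
    apply/permP => c'.
    have := key s ((sig_perm f s)^-1%g (sig_perm f s.+1 c')) c' hs.
    rewrite permKV eqxx -(IH (ltnW hs)) permKV.
    by move/esym/eqP.
  apply/ffunP => o; have := hall o.+1 (ltn_ord o); by rewrite !sig_permS.
exists [set g f | f : {ffun 'I_l -> {perm 'I_m}}]; split.
  move=> G /imsetP [f _ ->]; exists (u f); split; first exact: uinj.
  split; first by move=> i; rewrite /u; case: ifP => // _; rewrite addn_gt0 (leq_ltn_trans _ (hpmono _)).
  by move=> i j; rewrite inE.
by rewrite card_imset // card_ffun card_Sn !card_ord.
Qed.

Theorem proposition3p7 (A : finType) (w : nat -> A) (H : rel A)
  (Hsym : symmetric H) :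
  above_Bell (fun n g => in_P w H g).
Proof.
move=> k hk; have [N hN] := arith hk; exists N => n hn.
have /= [] := hN n hn.
case: (2 * k * (n %/ ((2 * k).+1 * (2 * k)))) => [|m'] // _ hLm hineq.
have [S [hS hcard]] := construct w H hLm.
by exists S; split => //; rewrite hcard.
Qed.
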